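(* Under the setting of the context (with $\lambda>0$, $\delta>0$), let $(x_t)_{t\ge0}$ be generated by RGD with step sizes chosen either by line minimization or by Armijo backtracking. Then: (i) every accumulation point $x_*$ of $(x_t)$ is a stationary point, i.e. $\operatorname{grad} f(x_* )=0$; (ii) there is a constant $\bar C>0$ such that for every $\epsilon>0$, there is an index $t\le \lceil (f(x_0)-f_{\inf})/(\bar C\epsilon^2)\rceil$ with $\|\operatorname{grad} f(x_t)\|_{x_t}\le\epsilon$, where $f_{\inf}=\inf_{\mathcal{M}}f$.
   Context: Fix integers $k\ge 2$, $R\ge 1$, $m_1,\dots,m_k\ge1$. Let $\mathcal{M}=\mathbb{R}^{m_1\times R}\times\cdots\times\mathbb{R}^{m_k\times R}$, with points $U=(U^{(1)},\dots,U^{(k)})$; its tangent space at every point is $\mathcal{M}$ itself. For $U\in\mathcal{M}$, let $[\![U^{(1)},\dots,U^{(k)}]\!]:=\sum_{r=1}^R U^{(1)}_{:,r}\circ\cdots\circ U^{(k)}_{:,r}\in\mathbb{R}^{m_1\times\cdots\times m_k}$ (sum of outer products of corresponding columns). Let $\mathcal{T}^\star\in\mathbb{R}^{m_1\times\cdots\times m_k}$, let $\Omega\subseteq [m_1]\times\cdots\times[m_k]$ be nonempty, $p=|\Omega|/(m_1\cdots m_k)$, and $P_\Omega$ the operator keeping entries indexed by $\Omega$ and zeroing the others. Let $\lambda>0$ and $$f(U)=\frac{1}{2p}\|P_\Omega([\![U^{(1)},\dots,U^{(k)}]\!]-\mathcal{T}^\star)\|_F^2+\frac{\lambda}{2}\sum_{i=1}^k\|U^{(i)}\|_F^2.$$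 For $i=1,\dots,k$, let $K_i(U)=U^{(k)}\odot\cdots\odot U^{(i+1)}\odot U^{(i-1)}\odot\cdots\odot U^{(1)}$ (Khatri–Rao product, i.e. columnwise Kronecker product), and for fixed $\delta>0$ let $H_i(U)=K_i(U)^TK_i(U)+\delta I_R$. The Riemannian metric on $\mathcal{M}$ is $g_U(\xi,\eta)=\sum_{i=1}^k\operatorname{tr}(\xi^{(i)}H_i(U)(\eta^{(i)})^T)$, with norm $\|\xi\|_U=\sqrt{g_U(\xi,\xi)}$. The Riemannian gradient is $\operatorname{grad} f(U)=(\partial_{U^{(1)}}f(U)H_1(U)^{-1},\dots,\partial_{U^{(k)}}f(U)H_k(U)^{-1})$, where $\partial_{U^{(i)}}f$ is the ordinary partial (Euclidean) gradient. RGD: given $x_0\in\mathcal{M}$, set $\eta_t=-\operatorname{grad} f(x_t)$ and $x_{t+1}=x_t+s_t\eta_t$. Step-size rules: (line minimization) $s_t\in\arg\min_{s>0} f(x_t+s\eta_t)$; (Armijo backtracking) with fixed $\sigma,\beta\in(0,1)$ and $s_{\min}>0$, a trial step $s_t^0>0$ is set ($s_t^0=1$ for $t\le1$, and $s_t^0=2(f(x_{t-1})-f(x_{t-2}))/g_{x_{t-1}}(\eta_{t-1},\operatorname{grad} f(x_{t-1}))$ for $t\ge2$), and $s_t=\max(s_t^0\beta^\ell,s_{\min})$ where $\ell\ge0$ is the smallest integer (assumed to exist) such that $f(x_t)-f(x_t+s_t\eta_t)\ge\sigma s_t\, g_{x_t}(-\operatorname{grad} f(x_t),\eta_t)$. 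*)

(* Defs.v *)
From HB Require Import structures.
From mathcomp Require Import all_boot all_order all_algebra.
From mathcomp Require Import all_classical all_reals all_analysis.
Set Implicit Arguments. Unset Strict Implicit. Unset Printing Implicit Defensive.
Import Order.TTheory GRing.Theory Num.Theory.
Local Open Scope ring_scope.

Section CPD.
Variables (R : realType) (k : nat) (m : 'I_k -> nat) (Rk : nat).

(* A Upoint U = (U^(1),...,U^(k)) of M (also a tangent vector). *)
Definition Upoint := forall i : 'I_k, 'M[R]_(m i, Rk).

Definition tindex := @fprod 'I_k (fun i => 'I_(m i)).
Definition tensor := tindex -> R.

(* [[U^(1),...,U^(k)]] : sum over r of outer products of the r-th columns *)
Definition cp_tensor (U : Upoint) : tensor :=
  fun j => \sum_(r < Rk) \prod_(i < k) U i (j i) r.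

Definition P_Omega (Omega : {set tindex}) (T : tensor) : tensor :=
  fun j => if j \in Omega then T j else 0.

Definition frob2_tensor (T : tensor) : R := \sum_(j : tindex) T j ^+ 2.
Definition frob2 p q (A : 'M[R]_(p, q)) : R := \sum_(a < p) \sum_(b < q) A a b ^+ 2.

Definition sampling_ratio (Omega : {set tindex}) : R :=
  #|Omega|%:R / (\prod_(i < k) m i)%:R.

Definition fobj (Tstar : tensor) (Omega : {set tindex}) (lam : R) (U : Upoint) : R :=
  (2 * sampling_ratio Omega)^-1 *
    frob2_tensor (P_Omega Omega (fun j => cp_tensor U j - Tstar j))
  + lam / 2 * \sum_(i < k) frob2 (U i).

(* Khatri-Rao product K_i(U) = U^(k) . ... . U^(i+1) . U^(i-1) . ... . U^(1):
   its rows are indexed by the multi-indices (j_l)_{l <> i}, its r-th column is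
   the Kronecker product of the r-th columns of the U^(l), l <> i. *)
Definition kr_index (i : 'I_k) := @fprod {l : 'I_k | l != i} (fun l => 'I_(m (val l))).

Definition khatri_rao (U : Upoint) (i : 'I_k) : 'M[R]_(#|kr_index i|, Rk) :=
  \matrix_(a, r) \prod_(l : {l : 'I_k | l != i}) U (val l) ((enum_val a : kr_index i) l) r.

Definition Hmat (delta : R) (U : Upoint) (i : 'I_k) : 'M[R]_Rk :=
  (khatri_rao U i)^T *m khatri_rao U i + delta%:M.

Definition shift_entry (U : Upoint) (i : 'I_k) (a : 'I_(m i)) (b : 'I_Rk) (t : R) : Upoint :=
  fun j => U j + t *: \matrix_(c, d) ((j == i) && (c == a :> nat) && (d == b))%:R.

Definition egrad (F : Upoint -> R) (U : Upoint) (i : 'I_k) : 'M[R]_(m i, Rk) :=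
  \matrix_(a, b) (derive1 (fun t => F (shift_entry U a b t)) 0).

Definition rgrad (delta : R) (F : Upoint -> R) (U : Upoint) : Upoint :=
  fun i => egrad F U i *m invmx (Hmat delta U i).

Definition rmetric (delta : R) (U xi eta : Upoint) : R :=
  \sum_(i < k) \tr (xi i *m Hmat delta U i *m (eta i)^T).

Definition rnorm (delta : R) (U xi : Upoint) : R := Num.sqrt (rmetric delta U xi xi).

Definition padd (x : Upoint) (s : R) (eta : Upoint) : Upoint := fun i => x i + s *: eta i.
Definition popp (x : Upoint) : Upoint := fun i => - x i.

Definition rgd_dir (delta : R) (F : Upoint -> R) (x : nat -> Upoint) (t : nat) : Upoint :=
  popp (rgrad delta F (x t)).

Definition rgd_iter (delta : R) (F : Upoint -> R) (x : nat -> Upoint) (s : nat -> R) :=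
  forall t, x t.+1 = padd (x t) (s t) (rgd_dir delta F x t).

Definition line_min_steps (delta : R) (F : Upoint -> R) (x : nat -> Upoint) (s : nat -> R) :=
  forall t, 0 < s t /\
    forall s', 0 < s' -> F (padd (x t) (s t) (rgd_dir delta F x t))
                         <= F (padd (x t) s' (rgd_dir delta F x t)).

Definition trial_step (delta : R) (F : Upoint -> R) (x : nat -> Upoint) (t : nat) : R :=
  if (t <= 1)%N then 1
  else 2 * (F (x t.-1) - F (x t.-2)) /
       rmetric delta (x t.-1) (rgd_dir delta F x t.-1) (rgrad delta F (x t.-1)).

Definition armijo_cond (delta sigma : R) (F : Upoint -> R) (x : nat -> Upoint) (t : nat) (st : R) :=
  sigma * st * rmetric delta (x t) (popp (rgrad delta F (x t))) (rgd_dir delta F x t)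
    <= F (x t) - F (padd (x t) st (rgd_dir delta F x t)).

Definition armijo_steps (delta sigma beta smin : R) (F : Upoint -> R)
    (x : nat -> Upoint) (s : nat -> R) :=
  forall t,
    exists l : nat,
      [/\ s t = Num.max (trial_step delta F x t * beta ^+ l) smin,
          armijo_cond delta sigma F x t (s t) &
          forall l' : nat, (l' < l)%N ->
            ~ armijo_cond delta sigma F x t
                (Num.max (trial_step delta F x t * beta ^+ l') smin)].

Definition accumulation_point (x : nat -> Upoint) (y : Upoint) :=
  forall eps : R, 0 < eps -> forall N : nat, exists2 t : nat, (N <= t)%N &
    forall i a b, `| x t i a b - y i a b | < eps.

Definition finf (F : Upoint -> R) : R := inf [set F U | U in [set: Upoint]].

End CPD.

(* Main.v *)
Require Import Defs.
From HB Require Import structures.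
From mathcomp Require Import all_boot all_order all_algebra.
From mathcomp Require Import all_classical all_reals all_analysis.
From mathcomp Require Import ring lra.
Set Implicit Arguments. Unset Strict Implicit. Unset Printing Implicit Defensive.
Import Order.TTheory GRing.Theory Num.Theory.
Local Open Scope ring_scope.

Section Expr.
Variables (R : realType) (V : Type).

Inductive expr : Type :=
  EVar of V | ECst of R | EAdd of expr & expr | EMul of expr & expr.

Fixpoint eval (env : V -> R) (e : expr) : R :=
  match e with
  | EVar v => env v
  | ECst c => c
  | EAdd a b => eval env a + eval env b
  | EMul a b => eval env a * eval env b
  end.

Fixpoint dd (dir : V -> R) (e : expr) : expr :=
  match e with
  | EVar v => ECst (dir v)
  | ECst _ => ECst 0
  | EAdd a b => EAdd (dd dir a) (dd dir b)
  | EMul a b => EAdd (EMul a (dd dir b)) (EMul (dd dir a) b)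
  end.

Fixpoint Bd (M : R) (e : expr) : R :=
  match e with
  | EVar _ => M
  | ECst c => `|c|
  | EAdd a b => Bd M a + Bd M b
  | EMul a b => Bd M a * Bd M b
  end.

Fixpoint Ld (M : R) (e : expr) : R :=
  match e with
  | EVar _ => 1
  | ECst _ => 0
  | EAdd a b => Ld M a + Ld M b
  | EMul a b => Bd M a * Ld M b + Ld M a * Bd M b
  end.

Fixpoint Rm (M : R) (e : expr) : R :=
  match e with
  | EVar _ => 0
  | ECst _ => 0
  | EAdd a b => Rm M a + Rm M b
  | EMul a b => Ld M a * Ld M b + Bd M a * Rm M b + Rm M a * Bd M b
  end.

Lemma Bd_ge0 (M : R) e : 0 <= M -> 0 <= Bd M e.
Proof. move=> hM; elim: e => /= [v|c|a ha b hb|a ha b hb] //; by rewrite ?addr_ge0 ?mulr_ge0. Qed.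

Lemma Ld_ge0 (M : R) e : 0 <= M -> 0 <= Ld M e.
Proof.
move=> hM; elim: e => /= [v|c|a ha b hb|a ha b hb] //; first by rewrite addr_ge0.
by rewrite addr_ge0 // mulr_ge0 // Bd_ge0.
Qed.

Lemma Rm_ge0 (M : R) e : 0 <= M -> 0 <= Rm M e.
Proof.
move=> hM; elim: e => /= [v|c|a ha b hb|a ha b hb] //; first by rewrite addr_ge0.
by rewrite !addr_ge0 // mulr_ge0 // ?Bd_ge0 ?Ld_ge0.
Qed.

Lemma eval_bound (M : R) env e : (forall v, `|env v| <= M) -> `|eval env e| <= Bd M e.
Proof.
move=> hb; elim: e => /= [v|c|a ha b hb'|a ha b hb'] //.
  by rewrite (le_trans (ler_normD _ _)) // lerD.
by rewrite normrM ler_pM.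
Qed.

Lemma eval_lip (M D : R) env env' e : (forall v, `|env v| <= M) -> (forall v, `|env' v| <= M) ->
  (forall v, `|env' v - env v| <= D) ->
  `|eval env' e - eval env e| <= Ld M e * D.
Proof.
move=> h1 h2 h3; elim: e => /= [v|c|a ha b hb|a ha b hb].
- by rewrite mul1r.
- by rewrite subrr normr0 mul0r.
- rewrite opprD addrACA [X in _ <= X]mulrDl (le_trans (ler_normD _ _)) // lerD //.
- have -> : eval env' a * eval env' b - eval env a * eval env b =
    eval env' a * (eval env' b - eval env b) + (eval env' a - eval env a) * eval env b by ring.
  apply: (le_trans (ler_normD _ _)); rewrite [X in _ <= X]mulrDl lerD //.
    by rewrite -mulrA normrM ler_pM // eval_bound.
  by rewrite mulrAC normrM ler_pM // eval_bound.
Qed.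

Lemma dd_bound (M D : R) env dir e : (forall v, `|env v| <= M) -> (forall v, `|dir v| <= D) ->
  `|eval env (dd dir e)| <= Ld M e * D.
Proof.
move=> h1 h2; elim: e => /= [v|c|a ha b hb|a ha b hb].
- by rewrite mul1r.
- by rewrite normr0 mul0r.
- by rewrite [X in _ <= X]mulrDl (le_trans (ler_normD _ _)) // lerD.
- apply: (le_trans (ler_normD _ _)); rewrite [X in _ <= X]mulrDl lerD //.
    by rewrite -mulrA normrM ler_pM // eval_bound.
  by rewrite mulrAC normrM ler_pM // eval_bound.
Qed.

Lemma eval_rem (M D : R) env env' e : 0 <= D -> (forall v, `|env v| <= M) -> (forall v, `|env' v| <= M) ->
  (forall v, `|env' v - env v| <= D) ->
  `|eval env' e - eval env e - eval env (dd (fun v => env' v - env v) e)| <= Rm M e * D ^+ 2.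
Proof.
move=> hD h1 h2 h3; elim: e => /= [v|c|a ha b hb|a ha b hb].
- by rewrite subrr normr0 mul0r.
- by rewrite !subrr normr0 mul0r.
- have -> : eval env' a + eval env' b - (eval env a + eval env b) -
     (eval env (dd (fun v => env' v - env v) a) + eval env (dd (fun v => env' v - env v) b)) =
     (eval env' a - eval env a - eval env (dd (fun v => env' v - env v) a)) +
     (eval env' b - eval env b - eval env (dd (fun v => env' v - env v) b)) by ring.
  by rewrite mulrDl (le_trans (ler_normD _ _)) // lerD.
- set la := eval env (dd _ a); set lb := eval env (dd _ b).
  have -> : eval env' a * eval env' b - eval env a * eval env b -
     (eval env a * lb + la * eval env b) =
     (eval env' a - eval env a) * lb + eval env' a * (eval env' b - eval env b - lb)
     + (eval env' a - eval env a - la) * eval env b by ring.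
  rewrite [X in _ <= X]mulrDl [X in _ <= X + _]mulrDl.
  apply: (le_trans (ler_normD _ _)); rewrite lerD //.
    apply: (le_trans (ler_normD _ _)); rewrite lerD //.
      rewrite normrM expr2 mulrACA ler_pM // ?eval_lip //.
      exact: dd_bound.
    by rewrite normrM -mulrA ler_pM // eval_bound.
  by rewrite normrM mulrAC ler_pM // eval_bound.
Qed.


Lemma eval_ext env1 env2 e : (forall v, env1 v = env2 v) -> eval env1 e = eval env2 e.
Proof. by move=> h; elim: e => /= [v|c|a ha b hb|a ha b hb]; rewrite ?ha ?hb. Qed.

Lemma dd_ext env d1 d2 e : (forall v, d1 v = d2 v) -> eval env (dd d1 e) = eval env (dd d2 e).
Proof. by move=> h; elim: e => /= [v|c|a ha b hb|a ha b hb]; rewrite ?ha ?hb. Qed.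

Lemma dd_add env d1 d2 e :
  eval env (dd (fun v => d1 v + d2 v) e) = eval env (dd d1 e) + eval env (dd d2 e).
Proof. elim: e => /= [v|c|a ha b hb|a ha b hb]; rewrite ?ha ?hb; ring. Qed.

Lemma dd_scale env (c : R) d e :
  eval env (dd (fun v => c * d v) e) = c * eval env (dd d e).
Proof. elim: e => /= [v|c'|a ha b hb|a ha b hb]; rewrite ?ha ?hb; ring. Qed.

Lemma dd_zero env e : eval env (dd (fun _ => 0) e) = 0.
Proof. elim: e => /= [v|c'|a ha b hb|a ha b hb]; rewrite ?ha ?hb; ring. Qed.

Lemma dd_sum env (I : Type) (s : seq I) (D : I -> V -> R) e :
  eval env (dd (fun v => \sum_(j <- s) D j v) e) = \sum_(j <- s) eval env (dd (D j) e).
Proof.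
elim: s => [|j s ih]; first by rewrite big_nil (dd_ext _ (d2 := fun _ => 0)) ?dd_zero // => v; rewrite big_nil.
rewrite big_cons -ih -dd_add; apply: dd_ext => v; by rewrite big_cons.
Qed.

Lemma is_derive_eqv (t : R) (f : R -> R) d1 d2 : d1 = d2 -> is_derive t (1:R) f d1 -> is_derive t (1:R) f d2.
Proof. by move->. Qed.

Lemma eval_derive env dir e (t : R) :
  is_derive t (1 : R) (fun s => eval (fun v => env v + s * dir v) e)
    (eval (fun v => env v + t * dir v) (dd dir e)).
Proof.
elim: e => /= [u|c|a ha b hb|a ha b hb].
- have -> : (fun s : R => env u + s * dir u) = cst (env u) + (fun s : R => s * dir u) by [].
  have h1 : is_derive t (1:R) (fun s : R => s * dir u) (dir u).
    have := is_deriveM (@is_derive_id _ _ t (1:R)) (is_derive_cst (dir u) t (1:R)).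
    by rewrite scaler0 add0r /= scaler1.
  by have := is_deriveD (is_derive_cst (env u) t (1:R)) h1; rewrite add0r.
- by apply: is_derive_cst.
- set fa := (fun s : R => eval (fun v => env v + s * dir v) a).
  set fb := (fun s : R => eval (fun v => env v + s * dir v) b).
  have -> : (fun s : R => fa s + fb s) = fa + fb by [].
  exact: is_deriveD.
- set fa := (fun s : R => eval (fun v => env v + s * dir v) a).
  set fb := (fun s : R => eval (fun v => env v + s * dir v) b).
  have -> : (fun s : R => fa s * fb s) = fa * fb by [].
  have h := is_deriveM ha hb.
  move: h; rewrite /GRing.scale /= -/fa -/fb.
  move=> h; apply: (is_derive_eqv _ h); ring.
Qed.

Lemma eval_derive1 env dir e :
  derive1 (fun s => eval (fun v => env v + s * dir v) e) 0 = eval env (dd dir e).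
Proof.
rewrite derive1E (@derive_val _ _ _ _ _ _ _ (eval_derive env dir e 0)).
by apply: eval_ext => v; rewrite mul0r addr0.
Qed.

End Expr.
Section Main.
Variables (R : realType) (k : nat) (m : 'I_k -> nat) (Rk : nat).

Definition VT := {i : 'I_k & ('I_(m i) * 'I_Rk)%type}.
Definition UP := Upoint R m Rk.
Definition envOf (U : UP) : VT -> R := fun v => U (tag v) (tagged v).1 (tagged v).2.
Definition polyU (P : UP -> R) := exists e : expr R VT, forall U, P U = eval (envOf U) e.

Lemma polyU_cst c : polyU (fun _ => c).
Proof. by exists (ECst _ c). Qed.
Lemma polyU_var i a b : polyU (fun U => U i a b).
Proof. by exists (EVar _ (existT _ i (a, b))). Qed.
Lemma polyU_add P Q : polyU P -> polyU Q -> polyU (fun U => P U + Q U).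
Proof. by move=> [e1 h1] [e2 h2]; exists (EAdd e1 e2) => U /=; rewrite h1 h2. Qed.
Lemma polyU_mul P Q : polyU P -> polyU Q -> polyU (fun U => P U * Q U).
Proof. by move=> [e1 h1] [e2 h2]; exists (EMul e1 e2) => U /=; rewrite h1 h2. Qed.
Lemma polyU_ext P Q : (forall U, P U = Q U) -> polyU P -> polyU Q.
Proof. by move=> h [e he]; exists e => U; rewrite -h. Qed.
Lemma polyU_sum (I : Type) (s : seq I) (F : I -> UP -> R) :
  (forall j, polyU (F j)) -> polyU (fun U => \sum_(j <- s) F j U).
Proof.
move=> h; elim: s => [|j s ih].
  by apply: (polyU_ext _ (polyU_cst 0)) => U; rewrite big_nil.
by apply: (polyU_ext _ (polyU_add (h j) ih)) => U; rewrite big_cons.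
Qed.
Lemma polyU_prod (I : Type) (s : seq I) (F : I -> UP -> R) :
  (forall j, polyU (F j)) -> polyU (fun U => \prod_(j <- s) F j U).
Proof.
move=> h; elim: s => [|j s ih].
  by apply: (polyU_ext _ (polyU_cst 1)) => U; rewrite big_nil.
by apply: (polyU_ext _ (polyU_mul (h j) ih)) => U; rewrite big_cons.
Qed.

Variables (Tstar : tensor R m) (Omega : {set tindex m}) (lam delta : R).

Lemma fobj_poly : polyU (fobj Tstar Omega lam).
Proof.
rewrite /fobj /frob2_tensor /frob2 /P_Omega /cp_tensor.
apply: polyU_add; apply: polyU_mul; try apply: polyU_cst.
  apply: polyU_sum => j; case: (j \in Omega).
    apply: (polyU_ext (P := fun U => (\sum_(r < Rk) \prod_(i < k) U i (j i) r + (- Tstar j)) *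
        (\sum_(r < Rk) \prod_(i < k) U i (j i) r + (- Tstar j)))); first by move=> U; rewrite expr2.
    apply: polyU_mul; apply: polyU_add; try apply: polyU_cst;
      apply: polyU_sum => r; apply: polyU_prod => i; exact: polyU_var.
  by apply: (polyU_ext (P := fun _ => 0)); [move=> U; rewrite expr2 mul0r | apply: polyU_cst].
apply: polyU_sum => i; apply: polyU_sum => a; apply: polyU_sum => b.
apply: (polyU_ext (P := fun U => U i a b * U i a b)); first by move=> U; rewrite expr2.
apply: polyU_mul; exact: polyU_var.
Qed.


Definition ddir (i : 'I_k) (a : 'I_(m i)) (b : 'I_Rk) : VT -> R :=
  fun v => ((tag v == i) && (val (tagged v).1 == val a) && ((tagged v).2 == b))%:R.

Lemma envOf_shift U i a b t v :
  envOf (shift_entry U a b t) v = envOf U v + t * ddir (i:=i) a b v.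
Proof. by case: v => j [c d]; rewrite /envOf /shift_entry /ddir /= !mxE. Qed.

Lemma envOf_padd U s W v : envOf (padd U s W) v = envOf U v + s * envOf W v.
Proof. by case: v => j [c d]; rewrite /envOf /padd /= !mxE. Qed.

Lemma egrad_eval (F : UP -> R) E (hE : forall U, F U = eval (envOf U) E) U i a b :
  egrad F U i a b = eval (envOf U) (dd (ddir (i:=i) a b) E).
Proof.
rewrite /egrad mxE -eval_derive1; congr (derive1 _ 0); apply: funext => t.
by rewrite hE; apply: eval_ext => v; rewrite envOf_shift.
Qed.

Lemma envOf_decomp (W : UP) v :
  envOf W v = \sum_(i < k) \sum_(a < m i) \sum_(b < Rk) W i a b * ddir (i:=i) a b v.
Proof.
case: v => j [c d]; rewrite /envOf /ddir /=.
rewrite (bigD1 j) //= [X in _ + X]big1 ?addr0; last first.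
  move=> i hij; apply: big1 => a _; apply: big1 => b _.
  by rewrite eq_sym (negbTE hij) mulr0.
rewrite (bigD1 c) //= [X in _ + X]big1 ?addr0; last first.
  move=> a hac; apply: big1 => b _.
  have h : (val c == val a) = false by apply/negbTE; rewrite eq_sym; exact: hac.
  by rewrite eqxx /= h mulr0.
rewrite (bigD1 d) //= [X in _ + X]big1 ?addr0; last first.
  by move=> b hbd; rewrite !eqxx /= eq_sym (negbTE hbd) mulr0.
by rewrite !eqxx mulr1.
Qed.

Lemma dd_decomp (F : UP -> R) E (hE : forall U, F U = eval (envOf U) E) U W :
  eval (envOf U) (dd (envOf W) E) =
  \sum_(i < k) \sum_(a < m i) \sum_(b < Rk) W i a b * egrad F U i a b.
Proof.
rewrite (dd_ext _ _ (envOf_decomp W)) dd_sum; apply: eq_bigr => i _.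
rewrite dd_sum; apply: eq_bigr => a _; rewrite dd_sum; apply: eq_bigr => b _.
by rewrite dd_scale (egrad_eval hE).
Qed.


Lemma le_sum1 (I : finType) (F : I -> R) j : (forall i, 0 <= F i) -> F j <= \sum_i F i.
Proof. by move=> h; rewrite (bigD1 j) //= lerDl sumr_ge0. Qed.

Lemma tr_mulT p q (A B : 'M[R]_(p, q)) : \tr (A *m B^T) = \sum_a \sum_b A a b * B a b.
Proof. by rewrite /mxtrace; apply: eq_bigr => a _; rewrite !mxE; apply: eq_bigr => b _; rewrite mxE. Qed.

Lemma sumsq_ge0 p q (A : 'M[R]_(p, q)) : 0 <= \sum_a \sum_b A a b ^+ 2.
Proof. by apply: sumr_ge0 => a _; apply: sumr_ge0 => b _; exact: sqr_ge0. Qed.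

Hypothesis hdelta : 0 < delta.

Lemma quad_ge p (U : UP) i (g : 'M[R]_(p, Rk)) :
  delta * \sum_a \sum_b g a b ^+ 2 <= \tr (g *m Hmat delta U i *m g^T).
Proof.
rewrite /Hmat mulmxDr mulmxDl mxtraceD mul_mx_scalar -scalemxAl mxtraceZ.
have -> : g *m ((khatri_rao U i)^T *m khatri_rao U i) *m g^T =
   (g *m (khatri_rao U i)^T) *m (g *m (khatri_rao U i)^T)^T by rewrite trmx_mul trmxK !mulmxA.
rewrite !tr_mulT addrC.
have -> : \sum_a \sum_b g a b * g a b = \sum_a \sum_b g a b ^+ 2.
  by apply: eq_bigr => a _; apply: eq_bigr => b _; rewrite expr2.
rewrite lerDl; apply: sumr_ge0 => a _; apply: sumr_ge0 => b _; by rewrite -expr2 sqr_ge0.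
Qed.



Lemma H_unit (U : UP) i : Hmat delta U i \in unitmx.
Proof.
rewrite unitmxE unitfE; apply/negP => /det0P [v vn0 hv].
have := quad_ge U i v; rewrite hv mul0mx mxtrace0 => h.
have hS : \sum_a \sum_b v a b ^+ 2 = 0.
  by apply/le_anti; rewrite sumsq_ge0 andbT -(pmulr_rle0 _ hdelta).
move/negP: vn0; apply; apply/eqP/matrixP => a b; rewrite mxE; apply/eqP.
rewrite -sqrf_eq0 eq_le sqr_ge0 andbT -hS.
apply: (le_trans _ (@le_sum1 _ (fun a => \sum_b v a b ^+ 2) a _)); last by move=> a'; apply: sumr_ge0 => b' _; exact: sqr_ge0.
by apply: (@le_sum1 _ (fun b => v a b ^+ 2)) => b'; exact: sqr_ge0.
Qed.

Lemma rgrad_mulH F (U : UP) i : rgrad delta F U i *m Hmat delta U i = egrad F U i.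
Proof. by rewrite /rgrad mulmxKV // H_unit. Qed.

Lemma rmetric_gg F (U : UP) : rmetric delta U (rgrad delta F U) (rgrad delta F U) =
  \sum_i \sum_a \sum_b egrad F U i a b * rgrad delta F U i a b.
Proof. by rewrite /rmetric; apply: eq_bigr => i _; rewrite rgrad_mulH tr_mulT. Qed.

Lemma rmetric_ge F (U : UP) : delta * \sum_i \sum_a \sum_b (rgrad delta F U i a b) ^+ 2 <=
  rmetric delta U (rgrad delta F U) (rgrad delta F U).
Proof. by rewrite /rmetric mulr_sumr; apply: ler_sum => i _; exact: quad_ge. Qed.

Lemma rmetric_popp (U g : UP) : rmetric delta U (popp g) (popp g) = rmetric delta U g g.
Proof. by rewrite /rmetric; apply: eq_bigr => i _; rewrite /popp linearN /= mulmxN mulNmx mulNmx opprK. Qed.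


Hypotheses (hOm : (0 < #|Omega|)%N) (hm : forall i, (1 <= m i)%N) (hlam : 0 < lam).
Local Notation f := (fobj Tstar Omega lam : UP -> R).

Lemma samp_pos : 0 < sampling_ratio R Omega.
Proof.
rewrite /sampling_ratio divr_gt0 // ltr0n //; exact: prodn_gt0.
Qed.

Lemma frob2_ge0 p q (A : 'M[R]_(p, q)) : 0 <= frob2 A.
Proof. exact: sumsq_ge0. Qed.

Lemma f_split (U : UP) : f U = (2 * sampling_ratio R Omega)^-1 *
    frob2_tensor (P_Omega Omega (fun j => cp_tensor U j - Tstar j)) + lam / 2 * \sum_(i < k) frob2 (U i).
Proof. by []. Qed.

Lemma f_ge0 (U : UP) : 0 <= f U.
Proof.
rewrite f_split addr_ge0 // mulr_ge0 //.
- by rewrite invr_ge0 mulr_ge0 // ltW // samp_pos.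
- by apply: sumr_ge0 => j _; exact: sqr_ge0.
- by rewrite divr_ge0 // ltW.
- by apply: sumr_ge0 => i _; exact: frob2_ge0.
Qed.

Lemma f_coord (U : UP) i a b : lam / 2 * U i a b ^+ 2 <= f U.
Proof.
rewrite f_split -[X in X <= _]add0r lerD //.
  rewrite mulr_ge0 //; first by rewrite invr_ge0 mulr_ge0 // ltW // samp_pos.
  by apply: sumr_ge0 => j _; exact: sqr_ge0.
rewrite ler_pM2l ?divr_gt0 //.
apply: (le_trans _ (@le_sum1 _ (fun i => frob2 (U i)) i _)); last by move=> i'; exact: frob2_ge0.
apply: (le_trans _ (@le_sum1 _ (fun a => \sum_b U i a b ^+ 2) a _)); last by move=> a'; apply: sumr_ge0 => b' _; exact: sqr_ge0.
by apply: (@le_sum1 _ (fun b => U i a b ^+ 2)) => b'; exact: sqr_ge0.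
Qed.

Lemma norm_le_sq (x : R) : `|x| <= 1 + x ^+ 2.
Proof.
rewrite -(real_normK (num_real x)); set y := `|x|.
have : 0 <= (y - 1) ^+ 2 by exact: sqr_ge0.
have : 0 <= y by exact: normr_ge0.
nra.
Qed.

Lemma coord_bound (U : UP) f0 : f U <= f0 -> forall v, `|envOf U v| <= 1 + 2 * f0 / lam.
Proof.
move=> hU [i [a b]]; rewrite /envOf /=.
apply: (le_trans (norm_le_sq _)); rewrite lerD2l.
have := f_coord U a b.
have h2 : U i a b ^+ 2 = (2 / lam) * (lam / 2 * U i a b ^+ 2).
  by field; rewrite gt_eqF.
move=> h; rewrite h2 (_ : 2 * f0 / lam = 2 / lam * f0); last by rewrite mulrAC.
rewrite ler_pM2l ?divr_gt0 //.
exact: le_trans hU.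
Qed.

Lemma finf_le (U : UP) : finf f <= f U.
Proof.
apply: ge_inf; last by exists U.
by exists 0 => y [V _ <-]; exact: f_ge0.
Qed.


Lemma envOf_popp (g : UP) v : envOf (popp g) v = - envOf g v.
Proof. by case: v => j [c d]; rewrite /envOf /popp /= mxE. Qed.

Lemma G2_ge0 F (U : UP) : 0 <= rmetric delta U (rgrad delta F U) (rgrad delta F U).
Proof.
apply: le_trans _ (rmetric_ge F U); apply: mulr_ge0; first exact: ltW.
by apply: sumr_ge0 => i _; apply: sumsq_ge0.
Qed.

Lemma g_bound F (U : UP) i a b :
  `|rgrad delta F U i a b| <= Num.sqrt (rmetric delta U (rgrad delta F U) (rgrad delta F U) / delta).
Proof.
rewrite -sqrtr_sqr ler_sqrt; last by rewrite divr_ge0 ?G2_ge0 // ltW.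
rewrite ler_pdivlMr // mulrC.
apply: le_trans _ (rmetric_ge F U); rewrite ler_pM2l //.
apply: (le_trans _ (@le_sum1 _ (fun i => \sum_a \sum_b (rgrad delta F U i a b) ^+ 2) i _)); last by move=> i'; exact: sumsq_ge0.
apply: (le_trans _ (@le_sum1 _ (fun a => \sum_b (rgrad delta F U i a b) ^+ 2) a _)); last by move=> a'; apply: sumr_ge0 => b' _; exact: sqr_ge0.
by apply: (@le_sum1 _ (fun b => (rgrad delta F U i a b) ^+ 2)) => b'; exact: sqr_ge0.
Qed.

Lemma descent f0 : exists2 alpha : R, 0 < alpha & forall U : UP, f U <= f0 ->
  f (padd U alpha (popp (rgrad delta f U))) <=
  f U - alpha / 2 * rmetric delta U (rgrad delta f U) (rgrad delta f U).
Proof.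
have [E hE] := fobj_poly.
set M0 := 1 + 2 * `|f0| / lam.
have hM0 : 0 <= M0 by rewrite addr_ge0 // divr_ge0 ?mulr_ge0 // ltW.
set Bg := \sum_i \sum_(a < m i) \sum_(b < Rk) Bd M0 (dd (ddir (i:=i) a b) E).
have hBg : 0 <= Bg by do 3! (apply: sumr_ge0 => ? _); exact: Bd_ge0.
set Gm := Bg / delta.
have hGm : 0 <= Gm by rewrite divr_ge0 // ltW.
set M1 := M0 + Gm.
have hM1 : 0 <= M1 by rewrite addr_ge0.
set Rr := Rm M1 E.
have hRr : 0 <= Rr by exact: Rm_ge0.
set alpha := delta / (2 * Rr + delta).
have hden : 0 < 2 * Rr + delta by rewrite ltr_wpDl // mulr_ge0.
have ha0 : 0 < alpha by rewrite divr_gt0.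
have ha1 : alpha <= 1 by rewrite ler_pdivrMr // mul1r lerDr mulr_ge0.
exists alpha => // U hU.
set g := rgrad delta f U.
set G2 := rmetric delta U g g.
set GN := Num.sqrt (G2 / delta).
have hG2 : 0 <= G2 by exact: G2_ge0.
have hGN0 : 0 <= GN by exact: sqrtr_ge0.
have hg : forall i a b, `|g i a b| <= GN by move=> i a b; exact: g_bound.
have hGN2 : GN ^+ 2 = G2 / delta by rewrite sqr_sqrtr // divr_ge0 // ltW.
have hU0 : forall v, `|envOf U v| <= M0.
  by apply: coord_bound; apply: le_trans hU (ler_norm _).
have he : forall i (a : 'I_(m i)) b, `|egrad f U i a b| <= Bd M0 (dd (ddir (i:=i) a b) E).
  by move=> i a b; rewrite (egrad_eval hE); exact: eval_bound.
have hG2b : G2 <= Bg * GN.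
  rewrite /G2 rmetric_gg mulr_suml; apply: ler_sum => i _; rewrite mulr_suml.
  apply: ler_sum => a _; rewrite mulr_suml; apply: ler_sum => b _.
  apply: le_trans (ler_norm _) _; rewrite normrM ler_pM //; exact: he.
have hGNm : GN <= Gm.
  rewrite ler_pdivlMr //.
  have : delta * GN ^+ 2 <= Bg * GN by rewrite hGN2 mulrC divfK ?gt_eqF.
  have [->|hp] := eqVneq GN 0; first by rewrite mul0r.
  have hp' : 0 < GN by rewrite lt_neqAle eq_sym hp.
  by move=> h; rewrite expr2 mulrA in h; rewrite mulrC -(ler_pM2r hp').
set U' := padd U alpha (popp g).
have hU1 : forall v, `|envOf U' v| <= M1.
  move=> v; rewrite envOf_padd envOf_popp /M1.
  apply: le_trans (ler_normD _ _) _; apply: lerD => //.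
  rewrite normrM normrN (ger0_norm (ltW ha0)) //.
  apply: le_trans _ hGNm; rewrite -[X in _ <= X]mul1r ler_pM // ?normr_ge0.
    exact: ltW.
  by case: v => i [a b]; exact: hg.
have hU0' : forall v, `|envOf U v| <= M1.
  by move=> v; apply: le_trans (hU0 v) _; rewrite lerDl.
have hD : forall v, `|envOf U' v - envOf U v| <= alpha * GN.
  move=> v; rewrite envOf_padd addrAC subrr add0r envOf_popp normrM normrN (ger0_norm (ltW ha0)) //.
  by rewrite ler_pM2l //; case: v => i [a b]; exact: hg.
have hrem := eval_rem E (mulr_ge0 (ltW ha0) hGN0) hU0' hU1 hD.
have hlin : eval (envOf U) (dd (fun v => envOf U' v - envOf U v) E) = - (alpha * G2).
  rewrite (dd_ext _ _ (d2 := fun v => alpha * envOf (popp g) v)); last first.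
    by move=> v; rewrite envOf_padd addrAC subrr add0r.
  rewrite dd_scale (dd_decomp hE) /G2 rmetric_gg -mulrN -sumrN; congr (_ * _).
  apply: eq_bigr => i _; rewrite -sumrN; apply: eq_bigr => a _; rewrite -sumrN.
  by apply: eq_bigr => b _; rewrite /popp mxE mulNr mulrC.
rewrite hlin -!hE opprK in hrem.
have key : Rr * (alpha * GN) ^+ 2 <= alpha / 2 * G2.
  rewrite exprMn hGN2.
  have -> : Rr * (alpha ^+ 2 * (G2 / delta)) = (alpha * G2) * (Rr / (2 * Rr + delta)).
    by rewrite /alpha; field; rewrite !gt_eqF.
  have -> : alpha / 2 * G2 = (alpha * G2) * (1 / 2) by field.
  rewrite ler_wpM2l ?mulr_ge0 //; first exact: ltW.
    by rewrite invr_ge0 ltW.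
  rewrite ler_pdivrMr // mulrC.
  have -> : (2 * Rr + delta) * (1 / 2) = Rr + delta / 2 by field.
  rewrite lerDl divr_ge0 //; exact: ltW.
have := le_trans (ler_norm _) (le_trans hrem key).
rewrite -/U' => h.
move: h; set a1 := f U'; set a0 := f U; set q := alpha * G2.
have -> : alpha / 2 * G2 = q / 2 by rewrite /q; field.
lra.
Qed.


Variables (x : nat -> UP) (s : nat -> R).
Definition G2s t := rmetric delta (x t) (rgrad delta f (x t)) (rgrad delta f (x t)).

Lemma telescope (C : R) : (forall t, C * G2s t <= f (x t) - f (x t.+1)) ->
  forall N, C * \sum_(t < N) G2s t <= f (x 0) - f (x N).
Proof.
move=> h; elim=> [|N ih]; first by rewrite big_ord0 mulr0 subrr.
rewrite big_ord_recr /= mulrDr.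
have -> : f (x 0) - f (x N.+1) = (f (x 0) - f (x N)) + (f (x N) - f (x N.+1)) by ring.
exact: lerD.
Qed.

Lemma decrease_ls : rgd_iter delta f x s -> line_min_steps delta f x s ->
  exists2 C : R, 0 < C & forall t, C * G2s t <= f (x t) - f (x t.+1).
Proof.
move=> hit hls; have [al hal hdesc] := descent (f (x 0)).
have step : forall t, f (x t) <= f (x 0) -> f (x t.+1) <= f (x t) - al / 2 * G2s t.
  move=> t ht; rewrite hit; have [_ hmin] := hls t.
  exact: le_trans (hmin al hal) (hdesc _ ht).
have hb : forall t, f (x t) <= f (x 0).
  elim=> // t ih; apply: le_trans (step t ih) _; apply: le_trans _ ih.
  by rewrite lerBlDr lerDl mulr_ge0 ?divr_ge0 ?G2_ge0 // ltW.
exists (al / 2); first by rewrite divr_gt0.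
by move=> t; rewrite lerBrDl -lerBrDr; exact: step.
Qed.

Lemma decrease_arm (sigma beta smin : R) : rgd_iter delta f x s -> 0 < sigma -> 0 < smin ->
  armijo_steps delta sigma beta smin f x s ->
  exists2 C : R, 0 < C & forall t, C * G2s t <= f (x t) - f (x t.+1).
Proof.
move=> hit hsig hsm harm; exists (sigma * smin); first by rewrite mulr_gt0.
move=> t; have [l [hs hc _]] := harm t.
move: hc; rewrite /armijo_cond /rgd_dir rmetric_popp -/(rgd_dir delta f x t) -hit => hc.
apply: le_trans hc; apply: ler_wpM2r; first exact: G2_ge0.
apply: ler_wpM2l; first exact: ltW.
by rewrite hs le_max lexx orbT.
Qed.


Lemma part2 (C : R) : 0 < C -> (forall t, C * G2s t <= f (x t) - f (x t.+1)) ->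
  forall eps : R, 0 < eps -> exists t : nat,
    ((t%:R : R) <= (Num.ceil ((f (x 0%N) - finf f) / (C * eps ^+ 2)))%:~R) /\
    rnorm delta (x t) (rgrad delta f (x t)) <= eps.
Proof.
move=> hC hdec eps he.
set D := f (x 0) - finf f.
have hD : 0 <= D by rewrite subr_ge0 finf_le.
have hP : 0 < C * eps ^+ 2 by rewrite mulr_gt0 // exprn_gt0.
set z := Num.ceil (D / (C * eps ^+ 2)).
have hz : 0 <= z.
  by rewrite ceil_ge0 (lt_le_trans (_ : -1 < 0)) ?ltrN10 // divr_ge0 // ltW.
set n := `|z|%N.
have hn : (n%:R : R) = z%:~R by rewrite natr_absz ger0_norm.
apply: contrapT => hne.
have hall : forall t, (t <= n)%N -> eps ^+ 2 < G2s t.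
  move=> t ht.
  have hlt : eps < rnorm delta (x t) (rgrad delta f (x t)).
    rewrite ltNge; apply/negP => hle; apply: hne; exists t; split => //.
    by rewrite -hn ler_nat.
  move: hlt; rewrite /rnorm -/(G2s t).
  have hq2 := sqr_sqrtr (G2_ge0 f (x t)); rewrite -/(G2s t) in hq2.
  set q := Num.sqrt _ in hq2 *; rewrite -hq2 => hlt.
  nra.
have hsum : (n%:R + 1) * eps ^+ 2 <= \sum_(t < n.+1) G2s t.
  have -> : (n%:R + 1) * eps ^+ 2 = \sum_(t < n.+1) eps ^+ 2.
    by rewrite sumr_const card_ord mulrSr mulrDl mul1r mulr_natl.
  by apply: ler_sum => t _; apply: ltW; apply: hall; rewrite -ltnS.
have htel := telescope hdec n.+1.
have hfin := finf_le (x n.+1).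
have hzD : D / (C * eps ^+ 2) <= n%:R by rewrite hn ceil_ge.
rewrite ler_pdivrMr // in hzD.
have h1 : C * ((n%:R + 1) * eps ^+ 2) <= C * \sum_(t < n.+1) G2s t by rewrite ler_wpM2l // ltW.
have e1 : C * ((n%:R + 1) * eps ^+ 2) = n%:R * (C * eps ^+ 2) + C * eps ^+ 2 by ring.
rewrite e1 in h1.
move: hzD h1 htel hfin hP; rewrite /D.
set a := n%:R * _; set S := C * _; set P := C * eps ^+ 2.

lra.
Qed.


Lemma H_poly i r r' : polyU (fun U => Hmat delta U i r r').
Proof.
apply: (polyU_ext (P := fun U => \sum_a khatri_rao U i a r * khatri_rao U i a r' + delta *+ (r == r'))).
  by move=> U; rewrite /Hmat !mxE; congr (_ + _); apply: eq_bigr => a _; rewrite !mxE.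
apply: polyU_add; last exact: polyU_cst.
apply: polyU_sum => a; apply: polyU_mul.
  apply: (polyU_ext (P := fun U => \prod_(l : {l : 'I_k | l != i}) U (val l) ((enum_val a : kr_index m i) l) r)).
    by move=> U; rewrite mxE.
  by apply: polyU_prod => l; exact: polyU_var.
apply: (polyU_ext (P := fun U => \prod_(l : {l : 'I_k | l != i}) U (val l) ((enum_val a : kr_index m i) l) r')).
  by move=> U; rewrite mxE.
by apply: polyU_prod => l; exact: polyU_var.
Qed.

Lemma H_bounded i (M : R) : exists B : R, forall U : UP, (forall v, `|envOf U v| <= M) ->
  forall r b, `|Hmat delta U i r b| <= B.
Proof.
have : forall rb : 'I_Rk * 'I_Rk, exists B : R, forall U : UP, (forall v, `|envOf U v| <= M) ->
    `|Hmat delta U i rb.1 rb.2| <= B.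
  move=> rb; have [e he] := H_poly i rb.1 rb.2.
  by exists (Bd M e) => U hU; rewrite he; exact: eval_bound.
case/fin_all_exists => Bf hBf.
exists (\sum_rb `|Bf rb|) => U hU r b.
apply: le_trans (hBf (r, b) U hU) _; apply: le_trans (ler_norm _) _.
by apply: (@le_sum1 _ (fun rb => `|Bf rb|)) => rb; exact: normr_ge0.
Qed.

Lemma sumG_mono N N' : (N <= N')%N -> \sum_(t < N) G2s t <= \sum_(t < N') G2s t.
Proof.
move=> h; rewrite -(subnKC h); elim: (N' - N)%N => [|j ih]; first by rewrite addn0.
by rewrite addnS big_ord_recr /= (le_trans ih) // lerDl G2_ge0.
Qed.


Lemma near_lower (y : UP) i (a : 'I_(m i)) b :
  egrad f y i a b != 0 ->
  exists2 d : R, 0 < d & exists2 e0 : R, 0 < e0 & forall U : UP,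
    (forall i a b, `|U i a b - y i a b| < d) ->
    e0 <= rmetric delta U (rgrad delta f U) (rgrad delta f U).
Proof.
move=> hab.
have [E hE] := fobj_poly.
set c := `|egrad f y i a b|.
have hc : 0 < c by rewrite normr_gt0.
set My := \sum_i \sum_(a < m i) \sum_(b < Rk) `|y i a b| + 1.
have hy0 : forall v, `|envOf y v| <= My - 1.
  move=> [j [a' b']]; rewrite /My addrK /envOf /=.
  apply: (le_trans _ (@le_sum1 _ (fun j => \sum_(a < m j) \sum_(b < Rk) `|y j a b|) j _)); last first.
    by move=> j'; do 2! (apply: sumr_ge0 => ? _); exact: normr_ge0.
  apply: (le_trans _ (@le_sum1 _ (fun a => \sum_(b < Rk) `|y j a b|) a' _)); last first.
    by move=> ?; apply: sumr_ge0 => ? _; exact: normr_ge0.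
  by apply: (@le_sum1 _ (fun b => `|y j a' b|)) => ?; exact: normr_ge0.
have hyb : forall v, `|envOf y v| <= My by move=> v; apply: le_trans (hy0 v) _; rewrite lerBlDr lerDl.
have hMy : 0 <= My by rewrite addr_ge0 //; do 3! (apply: sumr_ge0 => ? _); exact: normr_ge0.
set Ea := dd (ddir (i:=i) a b) E.
set L := Ld My Ea.
have hL : 0 <= L by exact: Ld_ge0.
have [BH hBH] := H_bounded i My.
set d := Num.min 1 (c / (2 * (L + 1))).
have hL1 : 0 < 2 * (L + 1) by rewrite mulr_gt0 // ltr_wpDl.
have hd : 0 < d by rewrite lt_min ltr01 divr_gt0.
have hd1 : d <= 1 by rewrite ge_min lexx.
have hd2 : d <= c / (2 * (L + 1)) by rewrite ge_min lexx orbT.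
set K := Rk%:R * `|BH|.
have hK : 0 <= K by rewrite mulr_ge0.
exists d => //; exists (delta * c ^+ 2 / (4 * (K ^+ 2 + 1))).
  by rewrite divr_gt0 ?mulr_gt0 ?exprn_gt0 // ltr_wpDl ?sqr_ge0.
move=> U hU.
have hxv : forall v, `|envOf U v - envOf y v| <= d by move=> [j [a' b']]; apply: ltW; exact: hU.
have hxb : forall v, `|envOf U v| <= My.
  move=> v; have -> : envOf U v = envOf y v + (envOf U v - envOf y v) by ring.
  apply: le_trans (ler_normD _ _) _.
  have -> : My = (My - 1) + 1 by ring.
  by apply: lerD => //; apply: le_trans (hxv v) hd1.
have hlip := eval_lip Ea hyb hxb hxv.
rewrite -!(egrad_eval hE) in hlip.
have hLd : L * d <= c / 2.
  apply: le_trans (_ : (L + 1) * d <= _).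
    by rewrite ler_pM2r // lerDl.
  rewrite -ler_pdivlMl ?ltr_wpDl //.
  apply: le_trans hd2 _; rewrite le_eqVlt; apply/orP; left; apply/eqP; field.
  by rewrite !gt_eqF // ltr_wpDl.
have hega : c / 2 <= `|egrad f U i a b|.
  have h1 : c <= `|egrad f U i a b| + `|egrad f U i a b - egrad f y i a b|.
    have := ler_normB (egrad f U i a b) (egrad f U i a b - egrad f y i a b).
    by rewrite opprB addrC subrK.
  have h2 := le_trans hlip hLd.
  lra.
set g := rgrad delta f U.
set G2 := rmetric delta U g g.
set GN := Num.sqrt (G2 / delta).
have hG2 : 0 <= G2 by exact: G2_ge0.
have hGN0 : 0 <= GN by exact: sqrtr_ge0.
have hGN2 : GN ^+ 2 = G2 / delta by rewrite sqr_sqrtr // divr_ge0 // ltW.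
have hgK : c / 2 <= GN * K.
  apply: le_trans hega _.
  rewrite -rgrad_mulH mxE.
  apply: le_trans (ler_norm_sum _ _ _) _.
  have -> : GN * K = \sum_(r < Rk) GN * `|BH|.
    by rewrite sumr_const card_ord /K mulrCA mulr_natl.
  apply: ler_sum => r _; rewrite normrM ler_pM //; first exact: g_bound.
  by apply: le_trans (ler_norm _); exact: hBH.
have hsq : (c / 2) * (c / 2) <= (GN * K) * (GN * K) by rewrite ler_pM // divr_ge0 // ltW.
have hsq' : delta * c ^+ 2 / 4 <= G2 * K ^+ 2.
  have -> : G2 = delta * GN ^+ 2 by rewrite hGN2 mulrC divfK // gt_eqF.
  have -> : delta * c ^+ 2 / 4 = delta * ((c / 2) * (c / 2)) by field.
  rewrite -(mulrA delta); apply: ler_wpM2l; first exact: ltW.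
  apply: le_trans hsq _; rewrite le_eqVlt; apply/orP; left; apply/eqP; ring.
rewrite ler_pdivrMr ?mulr_gt0 ?ltr_wpDl ?sqr_ge0 //.
have -> : G2 * (4 * (K ^+ 2 + 1)) = 4 * (G2 * K ^+ 2) + 4 * G2 by ring.
have : delta * c ^+ 2 = 4 * (delta * c ^+ 2 / 4) by field.
move=> ->; rewrite -[X in X <= _]addr0 lerD // ?ler_pM2l // mulr_ge0 //.
Qed.


Lemma part1 (C : R) : 0 < C -> (forall t, C * G2s t <= f (x t) - f (x t.+1)) ->
  forall y : UP, accumulation_point x y -> forall i, rgrad delta f y i = 0.
Proof.
move=> hC hdec y hy i; apply: contrapT => hne.
have [a [b hab]] : exists a b, egrad f y i a b != 0.
  apply: contrapT => hno; apply: hne; rewrite /rgrad.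
  have -> : egrad f y i = 0.
    apply/matrixP => a b; rewrite [X in _ = X]mxE; apply: contrapT => hab; apply: hno.
    by exists a, b; apply/eqP.
  by rewrite mul0mx.
have [d hd [e0 he0 hnear]] := near_lower hab.
have hinf : forall n : nat, exists N, n%:R * e0 <= \sum_(t < N) G2s t.
  elim=> [|n [N hN]]; first by exists 0%N; rewrite mul0r big_ord0.
  have [t ht htd] := hy d hd N.
  exists t.+1; rewrite big_ord_recr /= -addn1 natrD mulrDl mul1r.
  apply: lerD; last exact: hnear.
  exact: le_trans hN (sumG_mono ht).
have hf0 : 0 <= f (x 0) by exact: f_ge0.
have [n hn] := hinf (Num.Def.archi_bound (f (x 0) / (C * e0))).
have hb := archi_boundP (divr_ge0 hf0 (ltW (mulr_gt0 hC he0))).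
have htel := telescope hdec n.
have hfn := f_ge0 (x n).
rewrite ltr_pdivrMr ?mulr_gt0 // in hb.
have h2 : C * (Num.Def.archi_bound (f (x 0) / (C * e0)))%:R * e0 <= C * \sum_(t < n) G2s t.
  by rewrite -mulrA ler_wpM2l // ltW.
move: hb h2 htel hfn; set A := (Num.Def.archi_bound _)%:R.
have -> : A * (C * e0) = C * A * e0 by ring.
lra.
Qed.

End Main.

Theorem proposition4p3 (R : realType) (k : nat) (m : 'I_k -> nat) (Rk : nat)
    (Tstar : tensor R m) (Omega : {set tindex m}) (lam delta : R)
    (x : nat -> Upoint R m Rk) (s : nat -> R) :
  (2 <= k)%N -> (1 <= Rk)%N -> (forall i, (1 <= m i)%N) ->
  (0 < #|Omega|)%N -> 0 < lam -> 0 < delta ->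
  let f := fobj Tstar Omega lam in
  rgd_iter delta f x s ->
  (line_min_steps delta f x s \/
   exists sigma beta smin : R,
     [/\ 0 < sigma < 1, 0 < beta < 1, 0 < smin &
         armijo_steps delta sigma beta smin f x s]) ->
  (forall y : Upoint R m Rk, accumulation_point x y ->
     forall i, rgrad delta f y i = 0) /\
  (exists2 Cbar : R, 0 < Cbar &
     forall eps : R, 0 < eps ->
       exists t : nat,
         ((t%:R : R) <= (Num.ceil ((f (x 0%N) - finf f) / (Cbar * eps ^+ 2)))%:~R) /\
         rnorm delta (x t) (rgrad delta f (x t)) <= eps).
Proof.
move=> hk hRk hm hOm hlam hdelta f hit hsteps.
have [C hC hdec] : exists2 C : R, 0 < C &
    forall t, C * G2s Tstar Omega lam delta x t <= f (x t) - f (x t.+1).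
  case: hsteps => [hls | [sigma [beta [smin [/andP[hs0 hs1] _ hsm harm]]]]].
    exact: (decrease_ls hdelta hOm hm hlam hit hls).
  exact: (decrease_arm hdelta hit hs0 hsm harm).
split; first exact: (part1 hdelta hOm hm hlam hC hdec).
exists C => //; exact: (part2 hdelta hOm hm hlam hC hdec).
Qed.
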